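(* Let $G$ be a graph such that the subgraph $G_\Delta$ induced by the vertices of maximum degree $\Delta(G)$ is acyclic. Then for every integer $t>\Delta(G)$, any proper $t$-edge coloring of $G$ can be transformed into a proper $\Delta(G)$-edge coloring of $G$ by a sequence of interchanges.
   Context: All graphs are finite, without loops and multiple edges. $\Delta(G)$ is the maximum degree of $G$. A proper $t$-edge coloring of $G$ is a map $f:E(G)\to\{1,\dots,t\}$ with $f(e)\neq f(e')$ for adjacent edges $e,e'$; a proper $\Delta(G)$-edge coloring obtained in this way is one using only colors from $\{1,\dots,\Delta(G)\}$. For a proper edge coloring $f$ and colors $a,b$, $G_f(a,b)$ is the subgraph induced by the edges colored $a$ or $b$. An interchange (Kempe change) consists of swapping colors $a$ and $b$ on one connected component of $G_f(a,b)$. *)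

(* Defs.v *)
(* A simple graph is a symmetric irreflexive relation e on a finType T. *)
From Stdlib Require Import Relations.
From mathcomp Require Import all_boot.
Set Implicit Arguments. Unset Strict Implicit. Unset Printing Implicit Defensive.

Section Graph.
Variables (T : finType) (e : rel T).

Definition is_edge (E : {set T}) : bool :=
  [exists x, exists y, e x y && (E == [set x; y])].

Definition deg (x : T) : nat := #|[set y | e x y]|.

Definition Delta : nat := \max_(x : T) deg x.

(* edge colorings: maps from edges (2-sets) to colors; values off edges are irrelevant *)
Definition coloring := {set T} -> nat.

Definition proper_coloring (k : nat) (f : coloring) : Prop :=
  (forall E, is_edge E -> 1 <= f E <= k) /\
  (forall E E', is_edge E -> is_edge E' -> E != E' -> E :&: E' != set0 ->
     f E != f E').

Definition abrel (f : coloring) (a b : nat) : rel T :=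
  fun x y => e x y && ((f [set x; y] == a) || (f [set x; y] == b)).

Definition swap_col (a b c : nat) : nat :=
  if c == a then b else if c == b then a else c.

(* one interchange (Kempe change) with colors a, b in {1..t}: swap a and b on the
   component of G_f(a,b) containing the vertex v *)
Definition kempe_step (t : nat) (f g : coloring) : Prop :=
  exists a b : nat, exists v : T,
    [/\ 1 <= a <= t, 1 <= b <= t &
     forall E, is_edge E ->
       g E = if [exists x in E, connect (abrel f a b) v x]
             then swap_col a b (f E) else f E].

Definition max_deg_acyclic : Prop :=
  forall s : seq T, uniq s -> 3 <= size s -> all (fun x => deg x == Delta) s ->
    ~~ cycle e s.

End Graph.

(* Main.v *)
Require Import Defs.
From Stdlib Require Import Relations Classical.
From mathcomp Require Import all_boot zify.
Set Implicit Arguments. Unset Strict Implicit. Unset Printing Implicit Defensive.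

Section Kempe.
Variables (T : finType) (e : rel T).
Hypotheses (e_sym : symmetric e) (e_irr : irreflexive e).
Variable t : nat.

Local Notation D := (Delta e).
Local Notation proper := (proper_coloring e).

Lemma set2C (x y : T) : [set x; y] = [set y; x].
Proof. by apply/setP=> z; rewrite !inE orbC. Qed.

Lemma edge2 x y : e x y -> is_edge e [set x; y].
Proof. by move=> h; apply/existsP; exists x; apply/existsP; exists y; rewrite h eqxx. Qed.

Lemma edgeP E : is_edge e E -> exists x y, e x y /\ E = [set x; y].
Proof.
by case/existsP=> x /existsP [y /andP [h /eqP ->]]; exists x, y.
Qed.

Lemma deg_le x : deg e x <= D.
Proof. exact: (leq_bigmax (F := deg e) x). Qed.

Lemma same_col g k w a b : proper k g -> e w a -> e w b ->
  g [set w; a] = g [set w; b] -> a = b.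
Proof.
move=> [_ pr] ha hb heq; apply/eqP; apply: contraT => nab.
have hne : [set w; a] != [set w; b].
  apply: contra nab => /eqP hE.
  have : a \in [set w; b] by rewrite -hE set22.
  case/set2P=> [aw|->//]; by move: ha; rewrite aw e_irr.
have := pr _ _ (edge2 ha) (edge2 hb) hne.
rewrite heq eqxx; apply => //.
by apply/set0Pn; exists w; rewrite !inE eqxx.
Qed.

Lemma col_range g k x y : proper k g -> e x y -> 1 <= g [set x; y] <= k.
Proof. by move=> [h _] exy; apply: h; apply: edge2. Qed.

Definition nb (g : coloring T) (w : T) (a : nat) : nat :=
  \sum_(u : T) (e w u && (g [set w; u] == a)).

Definition hh (g : coloring T) (w : T) : nat :=
  \sum_(u : T) (e w u && (D < g [set w; u])).

Definition Phi (g : coloring T) : nat := \sum_(w : T) hh g w.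

Lemma nb_eq0P g w a : reflect (forall u, e w u -> g [set w; u] != a) (nb g w a == 0).
Proof.
rewrite /nb sum_nat_eq0; apply: (iffP forallP) => h u.
  by move=> hu; have := h u; rewrite hu /= eqb0.
by case hu: (e w u) => //=; rewrite eqb0 h.
Qed.

Lemma nb_gt0 g w a : 0 < nb g w a -> exists u, e w u /\ g [set w; u] = a.
Proof.
rewrite lt0n => /nb_eq0P h.
apply: NNPP => hn; apply: h => u hu; apply/eqP => ha; apply: hn; by exists u.
Qed.

Lemma nb_le1 g k w a : proper k g -> nb g w a <= 1.
Proof.
move=> pr; case: (boolP (nb g w a == 0)) => [/eqP -> //|].
rewrite -lt0n => /nb_gt0 [u [hu hc]].
rewrite /nb (bigD1 u) //= hu hc eqxx /= big1 // => v nvu.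
case hv: (e w v) => //=; case: eqP => // hcv.
by move/eqP: nvu; case; apply: (same_col pr hv hu); rewrite hcv hc.
Qed.

Lemma nb1 g k w a u : proper k g -> e w u -> g [set w; u] = a -> nb g w a = 1.
Proof.
move=> pr hu hc; apply/eqP; rewrite eqn_leq (nb_le1 _ _ pr) lt0n.
by apply/nb_eq0P => h; have := h u hu; rewrite hc eqxx.
Qed.


Lemma swap_colK a b c : swap_col a b (swap_col a b c) = c.
Proof.
rewrite /swap_col; case: (eqVneq c a) => [->|ca].
  by case: (eqVneq b a) => [->|ba]; rewrite ?eqxx // (negbTE ba) eqxx.
case: (eqVneq c b) => [->|cb]; first by rewrite eqxx.
by rewrite (negbTE ca) (negbTE cb).
Qed.

Lemma swap_fix a b c : c != a -> c != b -> swap_col a b c = c.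
Proof. by move=> ca cb; rewrite /swap_col (negbTE ca) (negbTE cb). Qed.

Lemma swap_range a b c k : 1 <= a <= k -> 1 <= b <= k -> 1 <= c <= k ->
  1 <= swap_col a b c <= k.
Proof. by rewrite /swap_col; case: ifP => // _; case: ifP. Qed.

Definition kswap (g : coloring T) a b v : coloring T := fun E =>
  if [exists x in E, connect (abrel e g a b) v x] then swap_col a b (g E) else g E.

Local Notation K g a b v := (connect (abrel e g a b) v).

Lemma abrel_sym g a b : symmetric (abrel e g a b).
Proof. by move=> x y; rewrite /abrel e_sym set2C. Qed.

Lemma K_step g a b v x y : K g a b v x -> abrel e g a b x y -> K g a b v y.
Proof. by move=> h1 h2; apply: connect_trans h1 (connect1 h2). Qed.

Lemma kswap_in g a b v x y : K g a b v x ->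
  kswap g a b v [set x; y] = swap_col a b (g [set x; y]).
Proof.
move=> hx; rewrite /kswap; case: ifP => //; case/existsP.
by exists x; rewrite set21 hx.
Qed.

Lemma kswap_out g a b v x y : e x y -> ~~ K g a b v x ->
  kswap g a b v [set x; y] = g [set x; y].
Proof.
move=> exy hx; rewrite /kswap; case: ifP => // /existsP [z /andP [/set2P [->|->] hz]].
  by rewrite hz in hx.
case: (eqVneq (g [set x; y]) a) => ha.
  have : K g a b v x by apply: K_step hz _; rewrite abrel_sym /abrel exy ha eqxx.
  by rewrite (negbTE hx).
case: (eqVneq (g [set x; y]) b) => hb.
  have : K g a b v x by apply: K_step hz _; rewrite abrel_sym /abrel exy hb eqxx orbT.
  by rewrite (negbTE hx).
by rewrite swap_fix.
Qed.

Lemma kswap_fix g a b v E : g E != a -> g E != b -> kswap g a b v E = g E.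
Proof. by move=> ha hb; rewrite /kswap; case: ifP => //; rewrite swap_fix. Qed.

Lemma kswap_step g a b v : 1 <= a <= t -> 1 <= b <= t ->
  kempe_step e t g (kswap g a b v).
Proof. by move=> ha hb; exists a, b, v; split. Qed.

Lemma edge_at E w : is_edge e E -> w \in E -> exists u, e w u /\ E = [set w; u].
Proof.
case/edgeP=> x [y [exy ->]] /set2P [->|->]; first by exists y.
by exists x; rewrite e_sym set2C.
Qed.

Lemma kswap_proper g a b v : proper t g -> 1 <= a <= t -> 1 <= b <= t ->
  proper t (kswap g a b v).
Proof.
move=> pr ha hb; split.
  move=> E hE; have [x [y [exy ->]]] := edgeP hE.
  have hr := col_range pr exy.
  case: (boolP (K g a b v x)) => hx; first by rewrite kswap_in // swap_range.
  by rewrite kswap_out.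
move=> E E' hE hE' nE /set0Pn [w]; rewrite inE => /andP [wE wE'].
have [u [hu E1]] := edge_at hE wE; have [u' [hu' E2]] := edge_at hE' wE'.
rewrite E1 E2 in nE *.
have := (proj2 pr) _ _ (edge2 hu) (edge2 hu') nE.
have ne0 : [set w; u] :&: [set w; u'] != set0.
  by apply/set0Pn; exists w; rewrite !inE !eqxx.
move=> /(_ ne0) hne.
case: (boolP (K g a b v w)) => hw.
  rewrite !kswap_in //; apply: contra hne => /eqP h.
  by apply/eqP; rewrite -[g [set w; u]](swap_colK a b) h swap_colK.
by rewrite !kswap_out.
Qed.

Lemma nb_kswap_in g a b v w d : K g a b v w ->
  nb (kswap g a b v) w d = nb g w (swap_col a b d).
Proof.
move=> hw; apply: eq_bigr => u _; rewrite kswap_in //.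
congr (nat_of_bool (_ && _)); apply/eqP/eqP => [<-|->]; by rewrite swap_colK.
Qed.

Lemma nb_kswap_out g a b v w d : ~~ K g a b v w ->
  nb (kswap g a b v) w d = nb g w d.
Proof.
move=> hw; apply: eq_bigr => u _.
by case hu: (e w u) => //=; rewrite kswap_out.
Qed.

Lemma nb_kswap_fix g a b v w d : d != a -> d != b ->
  nb (kswap g a b v) w d = nb g w d.
Proof.
move=> da db; case: (boolP (K g a b v w)) => hw; last by rewrite nb_kswap_out.
by rewrite nb_kswap_in // swap_fix.
Qed.

Lemma hh_kswap_out g a b v w : ~~ K g a b v w -> hh (kswap g a b v) w = hh g w.
Proof.
move=> hw; apply: eq_bigr => u _.
by case hu: (e w u) => //=; rewrite kswap_out.
Qed.

Lemma hh_kswap_low g a b v w : a <= D -> b <= D -> hh (kswap g a b v) w = hh g w.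
Proof.
move=> ha hb; case: (boolP (K g a b v w)) => hw; last by rewrite hh_kswap_out.
apply: eq_bigr => u _; rewrite kswap_in //; congr (nat_of_bool (_ && _)).
rewrite /swap_col; case: eqP => [->|_]; first by rewrite !ltnNge ha hb.
by case: eqP => [->|_] //; rewrite !ltnNge ha hb.
Qed.

Lemma hh_kswap_in g a b v w : a <= D -> D < b -> K g a b v w ->
  hh (kswap g a b v) w + nb g w b = hh g w + nb g w a.
Proof.
move=> ha hb hw; rewrite /hh /nb -!big_split /=; apply: eq_bigr => u _.
rewrite kswap_in //; case: (e w u) => //=.
rewrite /swap_col; case: (eqVneq (g [set w; u]) a) => [->|ca].
  have ab : (a == b) = false by apply/negbTE; rewrite neq_ltn (leq_ltn_trans ha hb).
  by rewrite hb ab ltnNge ha.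
case: (eqVneq (g [set w; u]) b) => [cb|cb]; first by rewrite cb ltnNge ha hb.
by rewrite addn0.
Qed.


Lemma Phi_kswap_low g a b v : a <= D -> b <= D -> Phi (kswap g a b v) = Phi g.
Proof. by move=> ha hb; apply: eq_bigr => w _; apply: hh_kswap_low. Qed.

Lemma Phi_kswap g a b v : a <= D -> D < b ->
  Phi (kswap g a b v) + \sum_(w | K g a b v w) nb g w b =
  Phi g + \sum_(w | K g a b v w) nb g w a.
Proof.
move=> ha hb; rewrite /Phi (bigID (fun w => K g a b v w)) /=.
rewrite [\sum_w hh g w](bigID (fun w => K g a b v w)) /=.
have e1 : \sum_(w | K g a b v w) hh (kswap g a b v) w + \sum_(w | K g a b v w) nb g w b
   = \sum_(w | K g a b v w) hh g w + \sum_(w | K g a b v w) nb g w a.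
  by rewrite -!big_split; apply: eq_bigr => w hw; apply: hh_kswap_in.
have e2 : \sum_(w | ~~ K g a b v w) hh (kswap g a b v) w = \sum_(w | ~~ K g a b v w) hh g w.
  by apply: eq_bigr => w hw; apply: hh_kswap_out.
lia.
Qed.

End Kempe.

Section Paths.
Variables (T : finType) (r : rel T).
Hypothesis r_sym : symmetric r.
Hypothesis deg2 : forall w a b c, r w a -> r w b -> r w c -> a = b \/ a = c \/ b = c.

Lemma det_paths p : forall q z w,
  (forall a b, r w a -> r w b -> a != z -> b != z -> a = b) ->
  path r w p -> path r w q -> z \notin p -> z \notin q ->
  uniq (w :: p) -> uniq (w :: q) ->
  (exists s, q = p ++ s) \/ (exists s, p = q ++ s).
Proof.
elim: p => [|a p IH] q z w hw pp pq zp zq up uq; first by left; exists q.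
case: q pq zq uq => [|b q] pq zq uq; first by right; exists (a :: p).
move: pp pq => /andP [wa pp] /andP [wb pq].
move: zp zq; rewrite !inE !negb_or => /andP [za zp] /andP [zb zq].
have ab : a = b by apply: hw; rewrite // eq_sym.
subst b.
move: up uq => /andP [wap up] /andP [waq uq].
move: wap waq; rewrite !inE !negb_or => /andP [_ wp] /andP [_ wq].
have haw : forall a1 b1, r a a1 -> r a b1 -> a1 != w -> b1 != w -> a1 = b1.
  move=> a1 b1 h1 h2 n1 n2.
  have h3 : r a w by rewrite r_sym.
  case: (deg2 h1 h2 h3) => [//|[e1|e1]]; first by rewrite e1 eqxx in n1.
  by rewrite e1 eqxx in n2.
case: (IH q w a haw pp pq wp wq up uq) => [[s ->]|[s ->]].
  by left; exists s.
by right; exists s.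
Qed.

Lemma endpoint_aux u v w p s :
  (forall a b, r v a -> r v b -> a = b) ->
  path r u (p ++ s) -> uniq (u :: p ++ s) -> last u p = v -> v != u ->
  last v s = w -> w != v -> False.
Proof.
move=> hv pth un lp vu ls wv.
case: s pth un ls wv => [|b s] pth un ls wv; first by rewrite /= -ls eqxx in wv.
case/lastP: p pth un lp vu => [|p x] pth un lp vu; first by rewrite /= -lp eqxx in vu.
rewrite last_rcons in lp; subst x.
rewrite cat_path rcons_path last_rcons /= in pth.
move: pth => /andP [/andP [_ hpv] /andP [hvb _]].
have hvp : r v (last u p) by rewrite r_sym.
have eb := hv _ _ hvp hvb.
move: un; rewrite -cat_cons cat_uniq => /and3P [_ /hasPn hn _].
have := hn b; rewrite inE eqxx /= => /(_ isT).
by rewrite -eb -rcons_cons mem_rcons inE mem_last orbT.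
Qed.

Lemma endpoint u v w :
  (forall a b, r u a -> r u b -> a = b) ->
  (forall a b, r v a -> r v b -> a = b) ->
  (forall a b, r w a -> r w b -> a = b) ->
  v != w -> v != u -> w != u -> connect r u v -> connect r u w -> False.
Proof.
move=> hu hv hw vw vu wu /connectP [p0 pp0 lp0] /connectP [q0 pq0 lq0].
case: (shortenP pp0) lp0 => p pp up _ lp0.
case: (shortenP pq0) lq0 => q pq uq _ lq0.
have hu' : forall a b, r u a -> r u b -> a != u -> b != u -> a = b.
  by move=> a b ha hb _ _; apply: hu.
have ul : forall s, uniq (u :: s) -> u \notin s by move=> s /andP [].
case: (det_paths hu' pp pq (ul _ up) (ul _ uq) up uq) => [[s qe]|[s pe]].
  subst q.
  have ls : last v s = w by rewrite lq0 last_cat lp0.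
  have wv : w != v by rewrite eq_sym.
  exact: (endpoint_aux hv pq uq (esym lp0) vu ls wv).
subst p.
have ls : last w s = v by rewrite lp0 last_cat lq0.
exact: (endpoint_aux hw pp up (esym lq0) wu ls vw).
Qed.

End Paths.
Section Main.
Variables (T : finType) (e : rel T).
Hypotheses (e_sym : symmetric e) (e_irr : irreflexive e).
Variable t : nat.
Variable f0 : coloring T.
Hypothesis pr0 : proper_coloring e t f0.

Local Notation D := (Delta e).
Local Notation proper := (proper_coloring e).
Local Notation K g a b v := (connect (abrel e g a b) v).
Local Notation nb := (nb e).
Local Notation hh := (hh e).
Local Notation Phi := (Phi e).
Local Notation kswap := (kswap e).

Definition reach := clos_refl_trans (coloring T) (kempe_step e t).

Lemma step_proper g g' : proper t g -> kempe_step e t g g' -> proper t g'.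
Proof.
move=> pr [a [b [v [ha hb hE]]]].
have pk := kswap_proper e_sym v pr ha hb.
split.
  by move=> E he; rewrite hE //; apply: (proj1 pk).
move=> E E' he he' nE ne; rewrite !hE //; exact: (proj2 pk).
Qed.

Lemma reach_proper g : reach f0 g -> proper t g.
Proof.
move=> h; elim: h pr0 => // [x y st|x y z _ IH1 _ IH2] px.
  exact: step_proper st.
exact: IH2 (IH1 px).
Qed.

Hypothesis stuck : forall g, reach f0 g -> Phi f0 <= Phi g.

Definition S g := reach f0 g /\ Phi g <= Phi f0.

Lemma S_proper g : S g -> proper t g.
Proof. by case=> h _; exact: reach_proper. Qed.

Lemma S_kswap g a b v : S g -> 1 <= a <= t -> 1 <= b <= t ->
  Phi (kswap g a b v) <= Phi g -> S (kswap g a b v).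
Proof.
move=> [r1 p1] ha hb hp; split; last exact: leq_trans hp p1.
apply: rt_trans r1 _; apply: rt_step; exact: kswap_step.
Qed.

Lemma S_low g a b v : S g -> 1 <= a <= D -> 1 <= b <= D -> D < t ->
  S (kswap g a b v).
Proof.
move=> sg /andP [a1 aD] /andP [b1 bD] Dt; apply: S_kswap => //.
- by rewrite a1 (leq_trans aD (ltnW Dt)).
- by rewrite b1 (leq_trans bD (ltnW Dt)).
by rewrite Phi_kswap_low.
Qed.

Lemma S_lt g a b v : S g -> 1 <= a <= t -> 1 <= b <= t ->
  Phi (kswap g a b v) < Phi g -> False.
Proof.
move=> sg ha hb hp.
have sg' : reach f0 (kswap g a b v).
  apply: rt_trans (proj1 sg) _; apply: rt_step; exact: kswap_step.
have := stuck sg'; have := proj2 sg; lia.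
Qed.

Lemma sum_low n c : \sum_(a < n) (c == a.+1) = (0 < c <= n).
Proof.
elim: n => [|n IH]; first by rewrite big_ord0; case: c.
rewrite big_ord_recr /= IH; clear IH; case: c => [|c] //=; rewrite eqSS.
case: (ltngtP c n) => h //=.
- by rewrite ltnS ltnW.
- by rewrite ltnS leqNgt h.
by rewrite h ltnSn.

Qed.

Lemma deg_sum w : deg e w = \sum_u (e w u : nat).
Proof.
rewrite /deg -sum1_card big_mkcond /=; apply: eq_bigr => u _.
by rewrite inE; case: (e w u).
Qed.

Lemma miss_exists g w : proper t g -> (0 < hh g w \/ deg e w < D) ->
  exists a, 1 <= a <= D /\ nb g w a = 0.
Proof.
move=> pr hyp; apply: NNPP => hn.
have hall : forall a : 'I_D, 1 <= nb g w a.+1.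
  move=> a; rewrite lt0n; apply/negP => /eqP h0; apply: hn.
  by exists a.+1; split => //; rewrite ltn_ord.
have hdeg : \sum_(a < D) nb g w a.+1 + hh g w <= deg e w.
  rewrite deg_sum /nb /hh exchange_big /= -big_split /=; apply: leq_sum => u _.
  case hu: (e w u) => /=; last by rewrite big1.
  have /andP [h1 h2] := col_range pr hu.
  rewrite sum_low h1 /=; case: leqP => //=.
have : D <= \sum_(a < D) nb g w a.+1.
  rewrite -[X in X <= _]card_ord -sum1_card; apply: leq_sum => a _; exact: hall.
have := deg_le e w; case: hyp; lia.
Qed.

Lemma hh_pos g x y : e x y -> D < g [set x; y] -> 0 < hh g x.
Proof.
move=> hxy hc; rewrite /hh (bigD1 y) //= hxy hc; lia.
Qed.

Lemma abrel_deg2 g a b : proper t g -> forall w p q s,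
  abrel e g a b w p -> abrel e g a b w q -> abrel e g a b w s ->
  p = q \/ p = s \/ q = s.
Proof.
move=> pr w p q s /andP [hp cp] /andP [hq cq] /andP [hs cs].
have sc := same_col e_irr pr.
case: (eqVneq (g [set w; p]) (g [set w; q])) => hpq; first by left; exact: sc hp hq hpq.
case: (eqVneq (g [set w; p]) (g [set w; s])) => hps; first by right; left; exact: sc hp hs hps.
right; right; apply: sc hq hs _.
move: cp cq cs hpq hps.
move: (g [set w; p]) (g [set w; q]) (g [set w; s]) => x1 x2 x3.
by move=> /orP[/eqP->|/eqP->] /orP[/eqP->|/eqP->] /orP[/eqP->|/eqP->]; rewrite ?eqxx.
Qed.

Lemma abrel_le1 g a b w : proper t g -> nb g w b = 0 ->
  forall p q, abrel e g a b w p -> abrel e g a b w q -> p = q.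
Proof.
move=> pr /eqP /nb_eq0P hb p q /andP [hp cp] /andP [hq cq].
have cp' : g [set w; p] = a by case/orP: cp => /eqP // h; move: (hb _ hp); rewrite h eqxx.
have cq' : g [set w; q] = a by case/orP: cq => /eqP // h; move: (hb _ hq); rewrite h eqxx.
by apply: (same_col e_irr pr hp hq); rewrite cp' cq'.
Qed.

Lemma abrel_le1' g a b w : proper t g -> nb g w a = 0 ->
  forall p q, abrel e g a b w p -> abrel e g a b w q -> p = q.
Proof.
move=> pr h0 p q hp hq.
have sw : forall u, abrel e g a b w u = abrel e g b a w u by move=> u; rewrite /abrel orbC.
by apply: (@abrel_le1 g b a w pr h0); rewrite -sw.
Qed.

Lemma closed_sub (r : rel T) (A : {set T}) v w : symmetric r ->
  (forall u u', r u u' -> u \in A -> u' \in A) -> connect r v w -> v \in A -> w \in A.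
Proof.
move=> rs hA hc hv; suff cl : closed r (mem A) by rewrite -(closed_connect cl hc).
move=> u u' ru; apply/idP/idP; first exact: hA.
by apply: hA; rewrite rs.
Qed.

Lemma K2 g a b x y w : proper t g -> e x y ->
  (forall u, e x u -> (g [set x; u] == a) || (g [set x; u] == b) -> u = y) ->
  (forall u, e y u -> (g [set y; u] == a) || (g [set y; u] == b) -> u = x) ->
  K g a b x w -> w = x \/ w = y.
Proof.
move=> pr hxy hx hy hw.
have : w \in [set x; y].
  apply: (closed_sub (abrel_sym e_sym g a b)) hw _; last by rewrite set21.
  move=> u u' /andP [hu hc] /set2P [eu|eu]; subst u.
    by rewrite (hx _ hu hc) set22.
  by rewrite (hy _ hu hc) set21.
by case/set2P; [left|right].
Qed.

Lemma base g x y a : S g -> e x y -> D < g [set x; y] -> 1 <= a <= D ->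
  nb g x a = 0 -> nb g y a = 0 -> False.
Proof.
move=> sg hxy hc /andP [a1 aD] hxa hya.
have pr := S_proper sg.
have /andP [c1 ct] := col_range pr hxy.
move hcE : (g [set x; y]) hc c1 ct => c hc c1 ct.
have Dt : D < t by apply: leq_trans hc ct.
have ha : 1 <= a <= t by rewrite a1 (leq_trans aD (ltnW Dt)).
have hcr : 1 <= c <= t by rewrite c1 ct.
apply: (S_lt (v := x) sg ha hcr).
have e0 := Phi_kswap e_sym g x aD hc.
have KK : forall w, K g a c x w -> w = x \/ w = y.
  move=> w; apply: K2 => //.
    move=> u hu /orP [/eqP h|/eqP h].
      by move/eqP/nb_eq0P: hxa => /(_ u hu); rewrite h eqxx.
    by apply: (same_col e_irr pr hu hxy); rewrite h hcE.
  move=> u hu /orP [/eqP h|/eqP h].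
    by move/eqP/nb_eq0P: hya => /(_ u hu); rewrite h eqxx.
  have hyx : e y x by rewrite e_sym.
  by apply: (same_col e_irr pr hu hyx); rewrite h set2C hcE.
have s0 : \sum_(w | K g a c x w) nb g w a = 0.
  by apply: big1 => w /KK [->|->].
have s1 : 0 < \sum_(w | K g a c x w) nb g w c.
  rewrite (bigD1 x) ?connect0 //= (nb1 e_irr pr hxy hcE); lia.
lia.
Qed.

Definition fan g x ys : Prop :=
  [/\ 0 < size ys, uniq ys, (forall i, i < size ys -> e x (nth x ys i)),
      D < g [set x; nth x ys 0] &
      forall i, i.+1 < size ys -> 1 <= g [set x; nth x ys i.+1] <= D /\
         nb g (nth x ys i) (g [set x; nth x ys i.+1]) = 0].

Lemma fan_take g x ys k : fan g x ys -> 0 < k -> k <= size ys -> fan g x (take k ys).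
Proof.
move=> [s0 u0 ad hi co] k0 ks.
have sz : size (take k ys) = k by rewrite size_takel.
split; rewrite ?sz //.
- exact: take_uniq.
- by move=> i ik; rewrite nth_take //; apply: ad; apply: leq_trans ks.
- by rewrite nth_take.
move=> i ik; rewrite !nth_take //; last exact: ltnW.
by apply: co; apply: leq_trans ks.
Qed.

Lemma fan_transfer g g' x ys : fan g x ys ->
  (forall i, i < size ys -> g' [set x; nth x ys i] = g [set x; nth x ys i]) ->
  (forall i, i.+1 < size ys -> nb g' (nth x ys i) (g [set x; nth x ys i.+1]) =
                               nb g (nth x ys i) (g [set x; nth x ys i.+1])) ->
  fan g' x ys.
Proof.
move=> [s0 u0 ad hi co] h1 h2; split => //; first by rewrite h1.
by move=> i hi'; rewrite h1 // h2 //; apply: co.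
Qed.

Lemma fan_neq g x ys i j : proper t g -> fan g x ys -> i < size ys -> j < size ys ->
  i != j -> g [set x; nth x ys i] != g [set x; nth x ys j].
Proof.
move=> pr [s0 u0 ad _ _] hi hj nij; apply/eqP => heq.
have := same_col e_irr pr (ad _ hi) (ad _ hj) heq.
by move/eqP; rewrite nth_uniq // (negbTE nij).
Qed.

Lemma fan_nx g x ys i : fan g x ys -> i < size ys -> nth x ys i != x.
Proof.
move=> [_ _ ad _ _] hi; apply/eqP => h; have := ad _ hi; by rewrite h e_irr.
Qed.

Lemma fan_Dt g x ys : proper t g -> fan g x ys -> D < t.
Proof.
move=> pr [s0 _ ad hi _]; have /andP [_ ct] := col_range pr (ad 0 s0).
exact: leq_trans hi ct.
Qed.

Lemma miss_noedge g w a u : nb g w a = 0 -> e w u -> g [set w; u] != a.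
Proof. by move/eqP/nb_eq0P; apply. Qed.

Lemma D1 m : forall g x ys a, S g -> fan g x ys -> size ys = m.+1 -> 1 <= a <= D ->
  nb g x a = 0 -> nb g (nth x ys m) a = 0 -> False.
Proof.
elim: m => [|m IH] g x ys a sg fg sz ha hxa hya.
  case: (fg) => s0 _ ad hi _.
  exact: (base sg (ad 0 s0) hi ha hxa hya).
have pr := S_proper sg.
have Dt := fan_Dt pr fg.
case: (fg) => s0 u0 ad hi co.
have hm : m.+1 < size ys by rewrite sz.
have [hb hbm] := co m hm.
set ym := nth x ys m.+1 in hb hbm.
set b := g [set x; ym] in hb hbm.
have hxym : e x ym by apply: ad.
have ba : b != a by apply: miss_noedge hxa hxym.
have sg' := S_low x sg ha hb Dt.
set g' := kswap g a b x in sg'.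
have KK : forall w, K g a b x w -> w = x \/ w = ym.
  move=> w; apply: K2 => //.
    move=> u hu /orP [/eqP h|/eqP h].
      by move: (miss_noedge hxa hu); rewrite h eqxx.
    exact: (same_col e_irr pr hu hxym).
  move=> u hu /orP [/eqP h|/eqP h].
    by move: (miss_noedge hya hu); rewrite h eqxx.
  have hyx : e ym x by rewrite e_sym.
  by apply: (same_col e_irr pr hu hyx); rewrite h set2C.
have fg1 := fan_take fg (ltn0Sn m) (ltnW hm).
have fg' : fan g' x (take m.+1 ys).
  apply: (fan_transfer fg1) => i; rewrite size_takel ?(ltnW hm) // => hi'.
    rewrite nth_take // /g' kswap_fix //.
      by apply: miss_noedge hxa (ad _ (ltn_trans hi' hm)).
    apply: (fan_neq pr fg) => //; first exact: ltn_trans hi' hm.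
    by rewrite neq_ltn hi'.
  have hi2 : i.+1 < size ys by apply: ltn_trans hi' hm.
  rewrite !nth_take // ?(ltnW hi') // /g' nb_kswap_fix //.
    by apply: miss_noedge hxa (ad _ hi2).
  by apply: (fan_neq pr fg) => //; rewrite neq_ltn hi'.
apply: (IH g' x (take m.+1 ys) b sg' fg' _ hb).
- by rewrite size_takel // ltnW.
- rewrite /g' nb_kswap_in ?connect0 //.
  by rewrite /swap_col (negbTE ba) eqxx.
rewrite nth_take // /g' nb_kswap_out //.
apply/negP => /KK [h|h].
  by move: (fan_nx fg (ltnW hm)); rewrite h eqxx.
move/eqP: h; rewrite /ym nth_uniq //; last exact: ltnW.
by rewrite eqn_leq ltnn andbF.
Qed.

Lemma D1' g x ys k a : S g -> fan g x ys -> k < size ys -> 1 <= a <= D ->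
  nb g x a = 0 -> nb g (nth x ys k) a = 0 -> False.
Proof.
move=> sg fg hk ha hxa hya.
apply: (D1 (m := k) sg (fan_take fg (ltn0Sn k) hk)) ha hxa _.
  by rewrite size_takel.
by rewrite nth_take.
Qed.

Lemma D2 g x ys : S g -> fan g x ys -> forall j i a, i < j -> j < size ys ->
  1 <= a <= D -> nb g (nth x ys i) a = 0 -> nb g (nth x ys j) a = 0 -> False.
Proof.
move=> sg fg; elim/ltn_ind => j IH i a ij js ha hia hja.
have pr := S_proper sg.
have Dt := fan_Dt pr fg.
case: (fg) => s0 u0 ad hi co.
have is_ : i < size ys by apply: ltn_trans ij js.
have IHs : forall l i' a', l != i' -> l < j -> i' < j -> 1 <= a' <= D ->
    nb g (nth x ys l) a' = 0 -> nb g (nth x ys i') a' = 0 -> False.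
  move=> l i' a' nl lj ij' ha' h1 h2.
  case: (ltngtP l i') nl => // hl _.
    exact: (IH i' ij' l a' hl (ltn_trans ij' js) ha' h1 h2).
  exact: (IH l lj i' a' hl (ltn_trans lj js) ha' h2 h1).
have [c [hc hxc]] := miss_exists pr (or_introl (hh_pos (ad 0 s0) hi)).
have hxa : nb g x a != 0.
  by apply/eqP => h0; apply: (D1' sg fg is_ ha h0 hia).
have hyc : forall l, l < size ys -> nb g (nth x ys l) c != 0.
  by move=> l hl; apply/eqP => h0; apply: (D1' sg fg hl hc hxc h0).
have ca : c != a by apply: contraNneq hxa => <-; rewrite hxc.
have nxc : forall u, e x u -> g [set x; u] != c by move=> u; apply: miss_noedge.
set r := abrel e g a c.
have rsym : symmetric r := abrel_sym e_sym g a c.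
have rdeg2 := abrel_deg2 (a := a) (b := c) pr.
have hx1 := abrel_le1 (a := a) pr hxc.
have hyi1 := abrel_le1' (b := c) pr hia.
have hyj1 := abrel_le1' (b := c) pr hja.
have nyx : forall l, l < size ys -> nth x ys l != x by move=> l; exact: fan_nx fg.
have nij : nth x ys i != nth x ys j.
  by rewrite nth_uniq // neq_ltn ij.
case: (boolP (connect r x (nth x ys i))) => Ki.
  have Kj : ~~ connect r x (nth x ys j).
    apply/negP => Kj.
    exact: (endpoint rsym rdeg2 hx1 hyi1 hyj1 nij (nyx _ is_) (nyx _ js) Ki Kj).
  have sg' := S_low (nth x ys j) sg ha hc Dt.
  set g' := kswap g a c (nth x ys j) in sg'.
  have Kx : ~~ connect r (nth x ys j) x.
    by apply: contra Kj; rewrite (sym_connect_sym rsym).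
  have Kyi : ~~ connect r (nth x ys j) (nth x ys i).
    apply: contra Kj => h; apply: connect_trans Ki _.
    by rewrite (sym_connect_sym rsym).
  have fg1 := fan_take fg (ltn0Sn j) js.
  have fg' : fan g' x (take j.+1 ys).
    apply: (fan_transfer fg1) => l; rewrite size_takel // => hl.
      by rewrite nth_take // /g' kswap_out //; apply: ad; apply: leq_trans hl js.
    have hl2 : l.+1 < size ys by apply: leq_trans hl js.
    rewrite !nth_take // ?(ltnW hl) //.
    case: (boolP (connect r (nth x ys j) (nth x ys l))) => Kl; last first.
      by rewrite /g' nb_kswap_out.
    have [hcl hml] := co l hl2.
    rewrite /g' nb_kswap_fix //; last exact: nxc (ad _ hl2).
    apply/eqP => hca; rewrite hca in hml.
    case: (eqVneq l i) => [eli|nli].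
      by subst l; rewrite Kl in Kyi.
    exact: (IHs l i a nli hl ij ha hml hia).
  apply: (D1 (m := j) sg' fg' _ hc).
  - by rewrite size_takel.
  - by rewrite /g' nb_kswap_out.
  rewrite nth_take // /g' nb_kswap_in ?connect0 //.
  by rewrite /swap_col (negbTE ca) eqxx.
have sg' := S_low x sg ha hc Dt.
set g' := kswap g a c x in sg'.
have fg1 := fan_take fg (ltn0Sn i) is_.
have nxa : forall l, l <= i -> g [set x; nth x ys l] != a.
  case=> [|l] hl.
    by apply/eqP => h; move: hi; rewrite h ltnNge; case/andP: ha => _ ->.
  have hl2 : l.+1 < size ys by apply: leq_ltn_trans hl is_.
  have [_ hml] := co l hl2.
  apply/eqP => hca; rewrite hca in hml.
  have nli : l != i by rewrite neq_ltn hl.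
  exact: (IHs l i a nli (ltn_trans hl ij) ij ha hml hia).
have fg' : fan g' x (take i.+1 ys).
  apply: (fan_transfer fg1) => l; rewrite size_takel // => hl.
    rewrite nth_take // /g' kswap_fix //; first exact: nxa.
    by apply: nxc; apply: ad; apply: leq_trans hl is_.
  have hl2 : l.+1 < size ys by apply: leq_trans hl is_.
  rewrite !nth_take // ?(ltnW hl) // /g' nb_kswap_fix //; first exact: nxa.
  exact: nxc (ad _ hl2).
apply: (D1 (m := i) sg' fg' _ ha).
- by rewrite size_takel.
- by rewrite /g' nb_kswap_in ?connect0 // /swap_col eqxx.
by rewrite nth_take // /g' nb_kswap_out.
Qed.

Lemma sum_ind (P : pred T) v : P v -> \sum_(w | P w) (w == v : nat) = 1.
Proof.
move=> hv; rewrite (bigD1 v) //= eqxx big1 // => w /andP [_ /negbTE ->] //.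
Qed.

Lemma shift_phi g x ys : S g -> fan g x ys -> 1 < size ys ->
  Phi (kswap g (g [set x; nth x ys 1]) (g [set x; nth x ys 0]) (nth x ys 0)) <= Phi g.
Proof.
move=> sg fg s1.
have pr := S_proper sg.
case: (fg) => s0 u0 ad hi co.
have [hb hb0] := co 0 s1.
set y0 := nth x ys 0 in hb0 hi *.
set y1 := nth x ys 1 in hb hb0 *.
move hbE : (g [set x; y1]) hb hb0 => b hb hb0.
move hcE : (g [set x; y0]) hi => c hc.
have /andP [_ bD] := hb.
have e0 := Phi_kswap e_sym g y0 bD hc.
suff : \sum_(w | K g b c y0 w) nb g w b <= \sum_(w | K g b c y0 w) nb g w c by lia.
have rsym : symmetric (abrel e g b c) := abrel_sym e_sym g b c.
have rdeg2 := abrel_deg2 (a := b) (b := c) pr.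
have hy0x : e y0 x by rewrite e_sym /y0; exact: ad 0 s0.
have hy0c : nb g y0 c = 1 by apply: (nb1 e_irr pr hy0x); rewrite set2C.
have hy01 := abrel_le1' (b := c) pr hb0.
have bad1 : forall w, nb g w c < nb g w b ->
    forall p q, abrel e g b c w p -> abrel e g b c w q -> p = q.
  move=> w hw; apply: (abrel_le1 (a := b) pr).
  by move: hw (nb_le1 e_irr w b pr); lia.
case: (boolP [exists z, K g b c y0 z && (nb g z c < nb g z b)]).
  case/existsP => z /andP [Kz bz].
  have zy0 : z != y0 by apply: contraTneq bz => ->; rewrite hb0 hy0c.
  have key : forall w, K g b c y0 w ->
      nb g w b + (w == y0) <= nb g w c + (w == z).
    move=> w Kw.
    case: (eqVneq w y0) => [->|wy0]; first by rewrite hb0 hy0c.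
    case: (eqVneq w z) => [->|wz]; first by have := nb_le1 e_irr z b pr; lia.
    rewrite !addn0 leqNgt; apply/negP => bw.
    have wz' : w != z by [].
    apply: (endpoint rsym rdeg2 hy01 (bad1 _ bw) (bad1 _ bz) wz' wy0 zy0 Kw Kz).
  have : \sum_(w | K g b c y0 w) (nb g w b + (w == y0)) <=
         \sum_(w | K g b c y0 w) (nb g w c + (w == z)) by apply: leq_sum.
  rewrite !big_split /= !sum_ind ?connect0 //; lia.
move=> /existsPn hn; apply: leq_sum => w Kw.
by move: (hn w); rewrite Kw /= -leqNgt.
Qed.

Lemma shift n : forall g x ys, size ys = n.+1 -> S g -> fan g x ys ->
  exists g', S g' /\ D < g' [set x; nth x ys n].
Proof.
elim: n => [|n IH] g x ys sz sg fg.
  by exists g; split => //; case: fg.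
have pr := S_proper sg.
have Dt := fan_Dt pr fg.
have s1 : 1 < size ys by rewrite sz.
have hphi := shift_phi sg fg s1.
case: (fg) => s0 u0 ad hi co.
have [hb hb0] := co 0 s1.
set y0 := nth x ys 0 in hi hb0 hphi.
set y1 := nth x ys 1 in hb hb0 hphi.
set b := g [set x; y1] in hb hb0 hphi.
set c := g [set x; y0] in hi hphi.
have /andP [c1 ct] := col_range pr (ad 0 s0).
have hbt : 1 <= b <= t by case/andP: hb => -> h; rewrite (leq_trans h (ltnW Dt)).
have hct : 1 <= c <= t by rewrite c1 ct.
have sg1 := S_kswap sg hbt hct hphi.
set g1 := kswap g b c y0 in sg1.
have Kx : K g b c y0 x.
  apply: connect1; rewrite /abrel e_sym ad // set2C eqxx orbT //.
have bc : b != c by rewrite neq_ltn (leq_ltn_trans (proj2 (andP hb)) hi).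
have fg1 : fan g1 x (behead ys).
  have szb : size (behead ys) = n.+1 by rewrite size_behead sz.
  split; rewrite ?szb //.
  - by move: u0; case: (ys) => //= ? ? /andP [].
  - by move=> i hi'; rewrite nth_behead; apply: ad; rewrite sz.
  - by rewrite nth_behead /g1 kswap_in // -/y1 -/b /swap_col eqxx.
  move=> i hi'; rewrite !nth_behead.
  have hi2 : i.+2 < size ys by rewrite sz.
  have [h1 h2] := co _ hi2.
  have n1 : g [set x; nth x ys i.+2] != b.
    by apply: (fan_neq pr fg) => //; rewrite sz.
  have n2 : g [set x; nth x ys i.+2] != c.
    by rewrite neq_ltn (leq_ltn_trans (proj2 (andP h1)) hi).
  by rewrite /g1 kswap_fix // nb_kswap_fix.
have szb : size (behead ys) = n.+1 by rewrite size_behead sz.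
have [g' [sg' hg']] := IH g1 x (behead ys) szb sg1 fg1.
by exists g'; split => //; rewrite -nth_behead.
Qed.

Lemma fan_rcons g x ys u : fan g x ys -> e x u -> u \notin ys ->
  1 <= g [set x; u] <= D -> nb g (nth x ys (size ys).-1) (g [set x; u]) = 0 ->
  fan g x (rcons ys u).
Proof.
move=> [s0 u0 ad hi co] hu nu hl hm.
have sz : size (rcons ys u) = (size ys).+1 by rewrite size_rcons.
split; rewrite ?sz //.
- by rewrite rcons_uniq nu.
- move=> i; rewrite ltnS leq_eqVlt nth_rcons => /orP [/eqP ->|hi'].
    by rewrite ltnn eqxx.
  by rewrite hi'; apply: ad.
- by rewrite nth_rcons s0.
move=> i; rewrite ltnS leq_eqVlt => /orP [/eqP hi'|hi'].
  rewrite !nth_rcons hi' ltnn eqxx -hi' /= ltnSn.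
  by split => //; move: hm; rewrite -hi' /=.
by rewrite !nth_rcons hi' (ltnW hi'); apply: co.
Qed.

Lemma fan_build g x y0 : S g -> e x y0 -> D < g [set x; y0] ->
  exists ys, [/\ fan g x ys, nth x ys 0 = y0, 1 < size ys &
                 deg e (nth x ys (size ys).-1) = D].
Proof.
move=> sg hxy hc.
have pr := S_proper sg.
have claim : forall n, (exists ys, [/\ fan g x ys, nth x ys 0 = y0 & size ys = n.+1]) \/
   (exists ys, [/\ fan g x ys, nth x ys 0 = y0, 1 < size ys &
                 deg e (nth x ys (size ys).-1) = D]).
  elim=> [|n IHn].
    left; exists [:: y0]; split => //; split => //; first by case.
  case: IHn => [[ys [fg h0 sz]]|hr]; last by right.
  case: (boolP ((0 < n) && (deg e (nth x ys n) == D))) => [/andP [n0 /eqP hd]|hnd].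
    by right; exists ys; split => //; rewrite sz.
  have hn : n < size ys by rewrite sz.
  have [bt [hbt hbm]] : exists a, 1 <= a <= D /\ nb g (nth x ys n) a = 0.
    apply: (miss_exists pr); move: hnd; case: n sz hn => [|n] sz hn hnd.
      left; rewrite h0; apply: (hh_pos (y := x)); first by rewrite e_sym.
      by rewrite set2C.
    by right; rewrite ltn_neqAle (deg_le e) andbT; move: hnd.
  have hxb : 0 < nb g x bt.
    by rewrite lt0n; apply/eqP => h; apply: (D1' sg fg hn hbt h hbm).
  have [u [hu hcu]] := nb_gt0 hxb.
  have nu : u \notin ys.
    apply/negP => uin.
    have hk := index_mem u ys; rewrite uin in hk.
    have hnk := nth_index x uin.
    case: (fg) => _ _ _ hi co.
    move: hk hnk; case: (index u ys) => [|k] hk hnk.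
      by move: hi; rewrite hnk hcu ltnNge; case/andP: hbt => _ ->.
    have [_ hm] := co k hk; rewrite hnk hcu in hm.
    have kn : k < n by rewrite -ltnS -sz.
    exact: (D2 sg fg kn hn hbt hm hbm).
  left; exists (rcons ys u); split.
  - by apply: fan_rcons => //; rewrite ?hcu // sz.
  - by rewrite nth_rcons; case: (fg) => -> *.
  by rewrite size_rcons sz.
case: (claim #|T|) => [[ys [fg _ sz]]|hr]; last exact: hr.
case: fg => _ u0 _ _ _.
move/card_uniqP: u0 => h2.
have h1 : #|ys| <= #|T| := max_card _.
rewrite h2 sz in h1.
by rewrite ltnn in h1.
Qed.

Lemma L g x y : S g -> e x y -> D < g [set x; y] ->
  exists z g', [/\ z != y, e x z, deg e z = D, S g' & D < g' [set x; z]].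
Proof.
move=> sg hxy hc.
have [ys [fg h0 s1 hd]] := fan_build sg hxy hc.
have sz : size ys = ((size ys).-1).+1 by case: (size ys) s1.
have hk : (size ys).-1 < size ys by case: (size ys) s1.
have k0 : (size ys).-1 != 0 by case: (size ys) s1 => [|[|n]].
have [g' [sg' hg']] := shift sz sg fg.
exists (nth x ys (size ys).-1), g'; split => //.
- rewrite -h0; case: (fg) => s0 u0 _ _ _.
  by rewrite nth_uniq.
by case: (fg) => _ _ ad _ _; apply: ad.
Qed.

Lemma sum_pos (F : T -> nat) : 0 < \sum_w F w -> exists w, 0 < F w.
Proof.
move=> h; case: (boolP [exists w, 0 < F w]) => [/existsP //|/existsPn hn].
move: h; rewrite big1 // => w _.
by apply/eqP; rewrite -leqn0 leqNgt hn.
Qed.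

Hypothesis acyc : max_deg_acyclic e.
Hypothesis Phi0 : 0 < Phi f0.

Lemma find_cycle (P : T -> Prop) : (exists w, P w) ->
  (forall w, P w -> exists a b, [/\ a != b, e w a, e w b, P a & P b]) ->
  exists s, [/\ uniq s, 3 <= size s, (forall y, y \in s -> P y) & cycle e s].
Proof.
move=> [w0 Pw0] hP.
have claim : forall n, (exists s, [/\ uniq s, 3 <= size s, (forall y, y \in s -> P y) & cycle e s])
  \/ (exists h q, [/\ uniq (h :: q), size q = n.+1, path e h q & forall y, y \in h :: q -> P y]).
  elim=> [|n IHn].
    have [a [b [_ ha _ Pa _]]] := hP _ Pw0.
    right; exists a, [:: w0]; split => //=.
    - by rewrite inE andbT; apply/eqP => aw; move: ha; rewrite aw e_irr.
    - by rewrite e_sym ha.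
    by move=> y; rewrite !inE => /orP [/eqP ->|/eqP ->].
  case: IHn => [hc|[h [q [uq sq pq Pq]]]]; first by left.
  have Ph : P h by apply: Pq; rewrite inE eqxx.
  have [a [b [ab ha hb Pa Pb]]] := hP _ Ph.
  case: q uq sq pq Pq => [//|q0 q'] uq sq pq Pq.
  have [u [hu Pu uq0]] : exists u, [/\ e h u, P u & u != q0].
    case: (eqVneq a q0) => [aq|aq]; last by exists a.
    by exists b; split => //; rewrite -aq eq_sym.
  case: (boolP (u \in h :: q0 :: q')) => uin; last first.
    right; exists u, (h :: q0 :: q'); split.
    - by rewrite cons_uniq uin uq.
    - by move: sq => /= [->].
    - by rewrite [path _ _ _]/= e_sym hu; exact: pq.
    by move=> y; rewrite inE => /orP [/eqP ->//|]; apply: Pq.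
  left.
  set q := q0 :: q' in uq sq pq Pq uin.
  have uh : u != h by apply/eqP => uh; move: hu; rewrite uh e_irr.
  have uinq : u \in q by move: uin; rewrite inE (negbTE uh).
  set k := index u q.
  have hk : k < size q by rewrite index_mem.
  have k0 : k != 0.
    apply/eqP => hk0; have := nth_index h uinq; rewrite -/k hk0 /= => hu0.
    by rewrite hu0 eqxx in uq0.
  exists (h :: take k.+1 q); split.
  - move: uq; rewrite cons_uniq => /andP [hq uq]; rewrite cons_uniq take_uniq // andbT.
    by apply: contra hq; apply: mem_take.
  - by rewrite /= size_takel //; case: (k) k0.
  - move=> y; rewrite inE => /orP [/eqP -> //|/mem_take hy]; apply: Pq.
    by rewrite inE hy orbT.
  rewrite /cycle rcons_path (take_path _ pq) andTb (take_nth h hk) last_rcons.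
  by rewrite nth_index // e_sym.
case: (claim #|T|) => // [[h [q [uq sq _ _]]]].
have h1 : #|h :: q| <= #|T| := max_card _.
move/card_uniqP: uq => h2; rewrite h2 /= sq in h1.
by rewrite ltnNge leqnSn in h1.
Qed.

Lemma final_contra : False.
Proof.
have sf0 : S f0 by split; [exact: rt_refl | exact: leqnn].
have [w hw] := sum_pos Phi0.
have [u hu] := sum_pos hw.
have [euw hwu] : e w u /\ D < f0 [set w; u].
  by move: hu; case: (e w u) => //; case: (D < f0 [set w; u]).
pose P z := deg e z = D /\ exists g y, [/\ S g, e z y & D < g [set z; y]].
have [z [g' [_ hwz hdz sg' hg']]] := L sf0 euw hwu.
have Pz : P z.
  split => //; exists g', w; split => //; first by rewrite e_sym.
  by rewrite set2C.
have hP : forall v, P v -> exists a b, [/\ a != b, e v a, e v b, P a & P b].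
  move=> v [hdv [g [y [sg hvy hg]]]].
  have [a [g1 [ay hva hda sg1 hg1]]] := L sg hvy hg.
  have [b [g2 [ba hvb hdb sg2 hg2]]] := L sg1 hva hg1.
  exists a, b; split => //; first by rewrite eq_sym.
  - split => //; exists g1, v; split => //; first by rewrite e_sym.
    by rewrite set2C.
  split => //; exists g2, v; split => //; first by rewrite e_sym.
  by rewrite set2C.
have [s [us ss Ps cs]] := find_cycle (ex_intro _ z Pz) hP.
have := acyc us ss; rewrite cs => /(_ _) /negP; apply; last by [].
by apply/allP => y /Ps [-> _].
Qed.

End Main.

Unset Implicit Arguments.
Set Strict Implicit.

Theorem proposition3p1 (T : finType) (e : rel T)
  (e_sym : symmetric e) (e_irr : irreflexive e) :
  @max_deg_acyclic T e ->
  forall (t : nat), @Delta T e < t ->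
  forall f : coloring T, @proper_coloring T e t f ->
  exists g : coloring T,
    clos_refl_trans (coloring T) (@kempe_step T e t) f g /\
    @proper_coloring T e (@Delta T e) g.
Proof.
move=> acyc t Dt f prf.
suff main : forall n f, Phi e f = n -> proper_coloring e t f ->
    exists g, reach e t f g /\ proper_coloring e (Delta e) g.
  exact: main _ f erefl prf.
elim/ltn_ind => n IH {}f hn {}prf.
case: (classic (exists g, reach e t f g /\ Phi e g < Phi e f)) => [[g [rg lt]]|hno].
  have prg := reach_proper e_sym prf rg.
  have lt' : Phi e g < n by rewrite -hn.
  have [g2 [r2 p2]] := IH _ lt' g erefl prg.
  by exists g2; split => //; apply: rt_trans rg r2.
have stuck : forall g, reach e t f g -> Phi e f <= Phi e g.
  move=> g rg; rewrite leqNgt; apply/negP => lt; apply: hno; by exists g.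
case: (posnP (Phi e f)) => [h0|hpos]; last first.
  by exfalso; exact: (final_contra e_sym e_irr prf stuck acyc hpos).
exists f; split; first exact: rt_refl.
split; last exact: (proj2 prf).
move=> E hE; have [x [y [exy ->]]] := edgeP hE.
have /andP [h1 _] := col_range prf exy.
rewrite h1 /= leqNgt; apply/negP => hD.
have := hh_pos exy hD.
suff : hh e f x <= Phi e f by rewrite h0 leqn0 => /eqP ->.
by rewrite /Phi (bigD1 x) //= leq_addr.
Qed.
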